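(* Let $A$ be a densely defined closed operator in a complex Hilbert space with $\operatorname{D}(A)\subset\operatorname{D}(A^* )$ and $\operatorname{Num}(A)\subset\{z:\operatorname{Im}z\ge0\}$. Assume that for every sequence $a_n>0$ with $a_n\to0$ one has $K(a_n)\to\infty$, where $$K(a)=\inf\Big\{\tfrac{\operatorname{Im}\langle Av,v\rangle}{(\operatorname{Re}\langle Av,v\rangle)^2}: v\in\operatorname{D}(A),\|v\|=1,\ 0<|\langle Av,v\rangle|<a,\ \operatorname{Re}\langle Av,v\rangle>0\Big\}.$$ Let $\alpha\in\mathbb{C}$ with $0<\operatorname{Re}\alpha<1$, $0<\operatorname{Im}\alpha<1$, $|\alpha|<1$, let $(\varepsilon_n)\subset(0,1)$ with $\varepsilon_n\to0$, and let $(u_n)\subset\operatorname{D}(A)$ with $\|u_n\|=1$ and $\langle Au_n,u_n\rangle=\varepsilon_n\alpha$. Let $(v_n)\subset\operatorname{D}(A)$ satisfy $\max(\sup_n\|v_n\|,\sup_n\|Av_n\|,\sup_n\|A^*v_n\|)\le1$ and $\sup_n|\operatorname{Re}\langle Av_n,v_n\rangle|\le\operatorname{Re}(\alpha)/2$. Then $$\operatorname{Re}(\langle Av_n,u_n\rangle+\langle Au_n,v_n\rangle)\to0\quad(n\to\infty).$$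
   Context: $\operatorname{Num}(A)=\{\langle Af,f\rangle: f\in\operatorname{D}(A),\|f\|=1\}$. The infimum of the empty set is $+\infty$. *)

(* Defs.v *)
From Stdlib Require Import Reals.
Open Scope R_scope.

Record Cplx := mkC { Re : R; Im : R }.

Definition Cadd (z w : Cplx) : Cplx := mkC (Re z + Re w) (Im z + Im w).
Definition Cmul (z w : Cplx) : Cplx :=
  mkC (Re z * Re w - Im z * Im w) (Re z * Im w + Im z * Re w).
Definition Cconj (z : Cplx) : Cplx := mkC (Re z) (- Im z).
Definition Cabs (z : Cplx) : R := sqrt (Re z ^ 2 + Im z ^ 2).
Definition RtoC (r : R) : Cplx := mkC r 0.
Definition C1 : Cplx := mkC 1 0.

(* ---------- complex Hilbert spaces ----------
   Inner product linear in the FIRST argument, conjugate-linear in the second. *)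
Record Hilbert := {
  Hcar :> Type;
  hzero : Hcar;
  hadd : Hcar -> Hcar -> Hcar;
  hopp : Hcar -> Hcar;
  hscal : Cplx -> Hcar -> Hcar;
  hinner : Hcar -> Hcar -> Cplx;
  hadd_assoc : forall x y z, hadd x (hadd y z) = hadd (hadd x y) z;
  hadd_comm : forall x y, hadd x y = hadd y x;
  hadd_0 : forall x, hadd x hzero = x;
  hadd_opp : forall x, hadd x (hopp x) = hzero;
  hscal_1 : forall x, hscal C1 x = x;
  hscal_assoc : forall a b x, hscal a (hscal b x) = hscal (Cmul a b) x;
  hscal_distr_v : forall a x y, hscal a (hadd x y) = hadd (hscal a x) (hscal a y);
  hscal_distr_s : forall a b x, hscal (Cadd a b) x = hadd (hscal a x) (hscal b x);
  hinner_add_l : forall x y z, hinner (hadd x y) z = Cadd (hinner x z) (hinner y z);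
  hinner_scal_l : forall a x y, hinner (hscal a x) y = Cmul a (hinner x y);
  hinner_conj : forall x y, hinner y x = Cconj (hinner x y);
  hinner_pos : forall x, 0 <= Re (hinner x x);
  hinner_def : forall x, Re (hinner x x) = 0 -> x = hzero;
  hcomplete : forall s : nat -> Hcar,
    (forall eps, 0 < eps -> exists N, forall m n, (N <= m)%nat -> (N <= n)%nat ->
        sqrt (Re (hinner (hadd (s m) (hopp (s n))) (hadd (s m) (hopp (s n))))) < eps) ->
    exists l, forall eps, 0 < eps -> exists N, forall n, (N <= n)%nat ->
        sqrt (Re (hinner (hadd (s n) (hopp l)) (hadd (s n) (hopp l)))) < eps
}.

Arguments hzero {h}. Arguments hadd {h}. Arguments hopp {h}.
Arguments hscal {h}. Arguments hinner {h}.

Section Ops.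
Context {H : Hilbert}.

Definition hnorm (x : H) : R := sqrt (Re (hinner x x)).
Definition hsub (x y : H) : H := hadd x (hopp y).

Definition hconv (s : nat -> H) (l : H) : Prop :=
  forall eps, 0 < eps -> exists N, forall n, (N <= n)%nat -> hnorm (hsub (s n) l) < eps.

(* A (possibly unbounded) linear operator: a domain D (predicate) and a map A
   whose values outside D are irrelevant. *)
Definition is_linear_operator (D : H -> Prop) (A : H -> H) : Prop :=
  D hzero /\
  (forall x y, D x -> D y -> D (hadd x y) /\ A (hadd x y) = hadd (A x) (A y)) /\
  (forall a x, D x -> D (hscal a x) /\ A (hscal a x) = hscal a (A x)).

Definition densely_defined (D : H -> Prop) : Prop :=
  forall x eps, 0 < eps -> exists f, D f /\ hnorm (hsub x f) < eps.

Definition closed_operator (D : H -> Prop) (A : H -> H) : Prop :=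
  forall (f : nat -> H) (x y : H),
    (forall n, D (f n)) -> hconv f x -> hconv (fun n => A (f n)) y ->
    D x /\ A x = y.

(* w = A^* v  (adjoint relation); for densely defined A, w is unique *)
Definition adjoint_rel (D : H -> Prop) (A : H -> H) (v w : H) : Prop :=
  forall g, D g -> hinner (A g) v = hinner g w.

Definition adjoint_dom (D : H -> Prop) (A : H -> H) (v : H) : Prop :=
  exists w, adjoint_rel D A v w.

Definition num_range_upper (D : H -> Prop) (A : H -> H) : Prop :=
  forall f, D f -> hnorm f = 1 -> 0 <= Im (hinner (A f) f).

(* The set whose infimum is K(a) *)
Definition Kset (D : H -> Prop) (A : H -> H) (a : R) (r : R) : Prop :=
  exists v, D v /\ hnorm v = 1 /\
    0 < Cabs (hinner (A v) v) /\ Cabs (hinner (A v) v) < a /\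
    0 < Re (hinner (A v) v) /\
    r = Im (hinner (A v) v) / (Re (hinner (A v) v)) ^ 2.

(* "K(a) >= M", where K(a) = inf Kset a in [-oo,+oo] and inf of the empty
   set is +oo; this is exactly "M is a lower bound of Kset a". *)
Definition K_ge (D : H -> Prop) (A : H -> H) (a M : R) : Prop :=
  forall r, Kset D A a r -> M <= r.

Definition K_tends_infty (D : H -> Prop) (A : H -> H) (a : nat -> R) : Prop :=
  forall M, exists N, forall n, (N <= n)%nat -> K_ge D A (a n) M.

End Ops.

(* Main.v *)
Require Import Defs.
From Stdlib Require Import Reals Lra Lia Psatz ClassicalEpsilon.
Open Scope R_scope.

Ltac absr := unfold Rabs in *; repeat match goal with
  | |- context [Rcase_abs ?a] => destruct (Rcase_abs a)
  | H : context [Rcase_abs ?a] |- _ => destruct (Rcase_abs a) end.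

Section L.
Context {H : Hilbert}.

Lemma ReAl (x y z : H) : Re (hinner (hadd x y) z) = Re (hinner x z) + Re (hinner y z).
Proof. rewrite hinner_add_l. reflexivity. Qed.
Lemma ImAl (x y z : H) : Im (hinner (hadd x y) z) = Im (hinner x z) + Im (hinner y z).
Proof. rewrite hinner_add_l. reflexivity. Qed.
Lemma ReSl a (x y : H) : Re (hinner (hscal a x) y) = Re a * Re (hinner x y) - Im a * Im (hinner x y).
Proof. rewrite hinner_scal_l. reflexivity. Qed.
Lemma ImSl a (x y : H) : Im (hinner (hscal a x) y) = Re a * Im (hinner x y) + Im a * Re (hinner x y).
Proof. rewrite hinner_scal_l. reflexivity. Qed.
Lemma ReC (x y : H) : Re (hinner y x) = Re (hinner x y).
Proof. rewrite (hinner_conj _ x y). reflexivity. Qed.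
Lemma ImC (x y : H) : Im (hinner y x) = - Im (hinner x y).
Proof. rewrite (hinner_conj _ x y). reflexivity. Qed.
Lemma ReAr (x y z : H) : Re (hinner x (hadd y z)) = Re (hinner x y) + Re (hinner x z).
Proof. rewrite (hinner_conj _ (hadd y z) x), hinner_add_l, (hinner_conj _ y x), (hinner_conj _ z x). simpl. ring. Qed.
Lemma ImAr (x y z : H) : Im (hinner x (hadd y z)) = Im (hinner x y) + Im (hinner x z).
Proof. rewrite (hinner_conj _ (hadd y z) x), hinner_add_l, (hinner_conj _ y x), (hinner_conj _ z x). simpl. ring. Qed.
Lemma ReSr a (x y : H) : Re (hinner x (hscal a y)) = Re a * Re (hinner x y) + Im a * Im (hinner x y).
Proof. rewrite (hinner_conj _ (hscal a y) x), hinner_scal_l, (hinner_conj _ y x). simpl. ring. Qed.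
Lemma ImSr a (x y : H) : Im (hinner x (hscal a y)) = Re a * Im (hinner x y) - Im a * Re (hinner x y).
Proof. rewrite (hinner_conj _ (hscal a y) x), hinner_scal_l, (hinner_conj _ y x). simpl. ring. Qed.

Lemma combR (x1 y1 x2 y2 : H) t :
  Re (hinner (hadd x1 (hscal (RtoC t) y1)) (hadd x2 (hscal (RtoC t) y2))) =
  Re (hinner x1 x2) + t * (Re (hinner x1 y2) + Re (hinner y1 x2)) + t*t*Re (hinner y1 y2).
Proof. rewrite ReAl, !ReAr, !ReSl, !ReSr, !ImSr. simpl. ring. Qed.
Lemma combI (x1 y1 x2 y2 : H) t :
  Im (hinner (hadd x1 (hscal (RtoC t) y1)) (hadd x2 (hscal (RtoC t) y2))) =
  Im (hinner x1 x2) + t * (Im (hinner x1 y2) + Im (hinner y1 x2)) + t*t*Im (hinner y1 y2).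
Proof. rewrite ImAl, !ImAr, !ImSl, !ImSr, !ReSr. simpl. ring. Qed.

Lemma scal2R (l : R) (x y : H) : Re (hinner (hscal (RtoC l) x) (hscal (RtoC l) y)) = l*l*Re (hinner x y).
Proof. rewrite ReSl, ReSr, ImSr. simpl. ring. Qed.
Lemma scal2I (l : R) (x y : H) : Im (hinner (hscal (RtoC l) x) (hscal (RtoC l) y)) = l*l*Im (hinner x y).
Proof. rewrite ImSl, ImSr, ReSr. simpl. ring. Qed.

Lemma in0lR (y : H) : Re (hinner hzero y) = 0.
Proof. pose proof (ReAl hzero hzero y) as E. rewrite hadd_0 in E. lra. Qed.
Lemma in0lI (y : H) : Im (hinner hzero y) = 0.
Proof. pose proof (ImAl hzero hzero y) as E. rewrite hadd_0 in E. lra. Qed.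
Lemma in0rR (y : H) : Re (hinner y hzero) = 0.
Proof. rewrite (ReC hzero y). apply in0lR. Qed.
Lemma in0rI (y : H) : Im (hinner y hzero) = 0.
Proof. rewrite (ImC hzero y), in0lI. ring. Qed.

Lemma norm1 (x : H) : hnorm x = 1 -> Re (hinner x x) = 1.
Proof. unfold hnorm; intro E. rewrite <- (sqrt_sqrt _ (hinner_pos _ x)), E. ring. Qed.
Lemma normle1 (x : H) : hnorm x <= 1 -> Re (hinner x x) <= 1.
Proof. unfold hnorm; intro E. pose proof (sqrt_sqrt _ (hinner_pos _ x)).
  pose proof (sqrt_pos (Re (hinner x x))). nra. Qed.

Lemma ReCS (x y : H) : Rabs (Re (hinner x y)) <= (Re (hinner x x) + Re (hinner y y)) / 2.
Proof.
  pose proof (hinner_pos _ (hadd x (hscal (RtoC 1) y))) as P1.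
  pose proof (hinner_pos _ (hadd x (hscal (RtoC (-1)) y))) as P2.
  rewrite combR in P1, P2. rewrite (ReC x y) in P1, P2. absr; lra.
Qed.
Lemma ImCS (x y : H) : Rabs (Im (hinner x y)) <= (Re (hinner x x) + Re (hinner y y)) / 2.
Proof.
  pose proof (ReCS (hscal (mkC 0 1) x) y) as P.
  rewrite !ReSl, ImSr in P. simpl in P. absr; lra.
Qed.

Lemma Rabs_both a b : Rabs a <= b -> -b <= a <= b.
Proof. absr; lra. Qed.

Lemma Cabs_ge z : Rabs (Re z) <= Cabs z.
Proof. unfold Cabs. rewrite <- sqrt_Rsqr_abs. apply sqrt_le_1_alt. unfold Rsqr. nra. Qed.
Lemma Cabs_le z : Cabs z <= Rabs (Re z) + Rabs (Im z).
Proof. unfold Cabs.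
  pose proof (Rabs_pos (Re z)). pose proof (Rabs_pos (Im z)).
  rewrite <- (sqrt_square (Rabs (Re z) + Rabs (Im z))) by lra.
  apply sqrt_le_1_alt. pose proof (Rsqr_abs (Re z)). pose proof (Rsqr_abs (Im z)).
  unfold Rsqr in *. nra. Qed.

Lemma Im_pos (D : H -> Prop) (A : H -> H) : is_linear_operator D A -> num_range_upper D A ->
  forall f, D f -> 0 <= Im (hinner (A f) f).
Proof.
  intros [_ [_ Hs]] Hn f Df.
  destruct (Req_dec (Re (hinner f f)) 0) as [E|E].
  - apply hinner_def in E. subst f. rewrite in0rI. lra.
  - pose proof (hinner_pos _ f) as P.
    set (N := Re (hinner f f)) in *.
    set (s := sqrt N).
    assert (Hss : s * s = N) by (apply sqrt_sqrt; lra).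
    assert (Hs0 : 0 < s) by (apply sqrt_lt_R0; lra).
    set (l := / s).
    assert (L : l * l * N = 1) by (unfold l; rewrite <- Hss; field; lra).
    assert (Hl : 0 < l) by (apply Rinv_0_lt_compat; lra).
    destruct (Hs (RtoC l) f Df) as [Dg Ag].
    assert (Hg : hnorm (hscal (RtoC l) f) = 1).
    { unfold hnorm. rewrite scal2R. fold N. rewrite L. apply sqrt_1. }
    pose proof (Hn _ Dg Hg) as Q. rewrite Ag, scal2I in Q. nra.
Qed.

Lemma step (D : H -> Prop) (A : H -> H) (hlin : is_linear_operator D A)
  (hnum : num_range_upper D A) (ar ai e : R) (u v ws : H)
  (har : 0 < ar < 1) (hai : 0 < ai < 1) (he : 0 < e < 1)
  (huD : D u) (hun : hnorm u = 1)
  (huR : Re (hinner (A u) u) = e * ar) (huI : Im (hinner (A u) u) = e * ai)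
  (hvD : D v) (hvn : hnorm v <= 1) (hAv : hnorm (A v) <= 1)
  (hws : adjoint_rel D A v ws) (hwsn : hnorm ws <= 1)
  (hRY : Rabs (Re (hinner (A v) v)) <= ar / 2) :
  exists g, D g /\ hnorm g = 1 /\ 0 < Re (hinner (A g) g) /\
    (1 - 2 * sqrt e) * Cabs (hinner (A g) g) <= 9 * sqrt e /\
    (Re (hinner (A v) u) + Re (hinner (A u) v))^2 *
       (Im (hinner (A g) g) / (Re (hinner (A g) g))^2) <= 20.
Proof.
  pose proof hlin as [_ [Ha Hs]].
  assert (Hcomb : forall t, D (hadd u (hscal (RtoC t) v)) /\
     A (hadd u (hscal (RtoC t) v)) = hadd (A u) (hscal (RtoC t) (A v))).
  { intro t. destruct (Hs (RtoC t) v hvD) as [D1 E1].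
    destruct (Ha u _ huD D1) as [D2 E2]. split; [exact D2| rewrite E2, E1; reflexivity]. }
  set (s := sqrt e).
  assert (Hs2 : s * s = e) by (apply sqrt_sqrt; lra).
  assert (Hs0 : 0 < s) by (apply sqrt_lt_R0; lra).
  assert (Hs1 : s < 1) by nra.
  pose proof (norm1 _ hun) as Nu.
  pose proof (normle1 _ hvn) as Nv.
  pose proof (normle1 _ hAv) as NAv.
  pose proof (normle1 _ hwsn) as Nws.
  pose proof (hinner_pos _ v) as Nv0.
  pose proof (Rabs_both _ _ (ReCS u v)) as Hp.
  pose proof (Rabs_both _ _ (ReCS (A v) u)) as Hr1.
  pose proof (Rabs_both _ _ (ReCS u ws)) as Hr2. rewrite <- (hws u huD) in Hr2.
  pose proof (Rabs_both _ _ (ImCS (A v) v)) as HIY.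
  pose proof (Im_pos D A hlin hnum v hvD) as HIY0.
  pose proof (Rabs_both _ _ hRY) as HRY.
  set (IX := Im (hinner (A u) v) + Im (hinner (A v) u)).
  assert (HIX : IX * IX <= 4 * e).
  { destruct (Hcomb (- IX / 2)) as [Df Af].
    pose proof (Im_pos D A hlin hnum _ Df) as Q.
    rewrite Af, combI, huI in Q. fold IX in Q. nra. }
  set (c := Re (hinner (A v) u) + Re (hinner (A u) v)).
  assert (Hc : -2 <= c <= 2) by (unfold c; lra).
  assert (Ht : exists t, (t = s \/ t = - s) /\ t * c = s * Rabs c).
  { destruct (Rle_dec 0 c).
    - exists s. split; [left; reflexivity|]. rewrite Rabs_right; lra.
    - exists (- s). split; [right; reflexivity|]. rewrite Rabs_left; lra. }
  destruct Ht as [t [Ht Htc]].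
  assert (Htt : t * t = e) by (destruct Ht as [-> | ->]; nra).
  set (p := Re (hinner u v)) in *.
  assert (Htp : - s <= t * p <= s) by (destruct Ht as [-> | ->]; split; nra).
  assert (HtIX : t * IX <= (e + IX * IX) / 2) by (pose proof (pow2_ge_0 (t - IX)); nra).
  pose proof (Rabs_pos c) as Hc0.
  assert (Hac : Rabs c <= 2) by (absr; lra).
  destruct (Hcomb t) as [Dw Aw].
  set (w := hadd u (hscal (RtoC t) v)) in *.
  assert (EW1 : Re (hinner (A w) w) = e * ar + t * c + t * t * Re (hinner (A v) v)).
  { rewrite Aw. unfold w. rewrite combR, huR. unfold c. ring. }
  assert (EW2 : Im (hinner (A w) w) = e * ai + t * IX + t * t * Im (hinner (A v) v)).
  { rewrite Aw. unfold w. rewrite combI, huI. unfold IX. ring. }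
  assert (EW3 : Re (hinner w w) = 1 + t * (2 * p) + t * t * Re (hinner v v)).
  { unfold w. rewrite combR, Nu, (ReC u v). fold p. ring. }
  set (ReW := Re (hinner (A w) w)) in *.
  set (ImW := Im (hinner (A w) w)) in *.
  set (NW := Re (hinner w w)) in *.
  assert (HReW : s * Rabs c <= ReW) by nra.
  assert (HReW0 : 0 < ReW) by nra.
  assert (HReWu : ReW <= 4 * s) by nra.
  assert (HImW : ImW <= 5 * e) by nra.
  assert (HImW0 : 0 <= ImW) by (apply (Im_pos D A hlin hnum w Dw)).
  assert (HNWl : 1 - 2 * s <= NW) by nra.
  assert (HNWu : NW <= 4) by nra.
  assert (HNW : 0 < NW).
  { pose proof (hinner_pos _ w) as P. fold NW in P. destruct (Req_dec NW 0) as [E|E]; [|lra].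
    apply hinner_def in E. unfold ReW in HReW0. rewrite E, in0rR in HReW0. lra. }
  set (r := sqrt NW).
  assert (Hrr : r * r = NW) by (apply sqrt_sqrt; lra).
  assert (Hr0 : 0 < r) by (apply sqrt_lt_R0; lra).
  set (l := / r).
  assert (L : l * l * NW = 1) by (unfold l; rewrite <- Hrr; field; lra).
  assert (Hl : 0 < l) by (apply Rinv_0_lt_compat; lra).
  destruct (Hs (RtoC l) w Dw) as [Dg Ag].
  exists (hscal (RtoC l) w).
  assert (EG1 : Re (hinner (A (hscal (RtoC l) w)) (hscal (RtoC l) w)) = l * l * ReW)
    by (rewrite Ag, scal2R; reflexivity).
  assert (EG2 : Im (hinner (A (hscal (RtoC l) w)) (hscal (RtoC l) w)) = l * l * ImW)
    by (rewrite Ag, scal2I; reflexivity).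
  pose proof (Cabs_le (hinner (A (hscal (RtoC l) w)) (hscal (RtoC l) w))) as HC.
  pose proof (Cabs_ge (hinner (A (hscal (RtoC l) w)) (hscal (RtoC l) w))) as HC0.
  rewrite EG1, EG2 in HC. rewrite EG1 in HC0.
  rewrite EG1, EG2.
  set (CC := Cabs (hinner (A (hscal (RtoC l) w)) (hscal (RtoC l) w))) in *.
  assert (Hll : 0 < l * l) by (apply Rmult_lt_0_compat; lra).
  rewrite (Rabs_right (l * l * ReW)) in HC by (left; apply Rmult_lt_0_compat; lra).
  rewrite (Rabs_right (l * l * ImW)) in HC by (apply Rle_ge, Rmult_le_pos; lra).
  assert (Hes : e <= s) by (rewrite <- Hs2; pose proof (Rmult_le_compat_r s s 1 (Rlt_le _ _ Hs0) (Rlt_le _ _ Hs1)); lra).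
  assert (HCC : CC <= l * l * (9 * s)).
  { apply Rle_trans with (l * l * (ReW + ImW)); [lra|].
    apply Rmult_le_compat_l; lra. }
  assert (HCC0 : 0 <= CC) by (unfold CC, Cabs; apply sqrt_pos).
  split; [exact Dg|]. split.
  { unfold hnorm. rewrite scal2R. fold NW. rewrite L. apply sqrt_1. }
  split; [apply Rmult_lt_0_compat; lra|]. split.
  { destruct (Rle_dec (1 - 2 * s) 0).
    - pose proof (Rmult_le_compat_r CC (1 - 2 * s) 0 HCC0 r0). lra.
    - assert (0 <= l * l * (9 * s)) by (apply Rmult_le_pos; lra).
      apply Rle_trans with (NW * (l * l * (9 * s))).
      + apply Rle_trans with ((1 - 2 * s) * (l * l * (9 * s))).
        * apply Rmult_le_compat_l; lra.
        * apply Rmult_le_compat_r; lra.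
      + replace (NW * (l * l * (9 * s))) with ((l * l * NW) * (9 * s)) by ring.
        rewrite L. lra. }
  fold c.
  assert (Lin : l * l = / NW).
  { apply (Rmult_eq_reg_r NW); [rewrite L; field; lra | lra]. }
  replace (c ^ 2 * (l * l * ImW / (l * l * ReW) ^ 2)) with
    ((c * c * ImW * NW) / (ReW * ReW)) by (rewrite Lin; field; split; lra).
  assert (K : c * c * ImW * NW <= 20 * (ReW * ReW)).
  { assert (Habs : Rabs c * Rabs c = c * c) by (pose proof (Rsqr_abs c); unfold Rsqr in *; lra).
    assert (K1 : c * c * e <= ReW * ReW).
    { assert (s * Rabs c * (s * Rabs c) <= ReW * ReW)
        by (apply Rmult_le_compat; [apply Rmult_le_pos; lra | apply Rmult_le_pos; lra | lra | lra]).
      replace (c * c * e) with (s * Rabs c * (s * Rabs c)); [lra|].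
      rewrite <- Hs2, <- Habs. ring. }
    assert (K2 : ImW * NW <= 5 * e * 4) by (apply Rmult_le_compat; lra).
    assert (K3 : 0 <= c * c) by (rewrite <- Habs; apply Rmult_le_pos; apply Rabs_pos).
    replace (c * c * ImW * NW) with (c * c * (ImW * NW)) by ring.
    apply Rle_trans with (c * c * (5 * e * 4)).
    - apply Rmult_le_compat_l; lra.
    - lra. }
  unfold Rdiv. assert (0 < ReW * ReW) by (apply Rmult_lt_0_compat; lra).
  apply Rle_trans with (20 * (ReW * ReW) * / (ReW * ReW)).
  - apply Rmult_le_compat_r; [|exact K]. left. apply Rinv_0_lt_compat. lra.
  - right. field. lra.
Qed.

End L.

Theorem mainTheorem10 (H : Hilbert) (D : H -> Prop) (A : H -> H)
  (hlin : is_linear_operator D A)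
  (hdense : densely_defined D)
  (hclosed : closed_operator D A)
  (hdom : forall v, D v -> adjoint_dom D A v)
  (hnum : num_range_upper D A)
  (hK : forall a : nat -> R, (forall n, 0 < a n) -> Un_cv a 0 -> K_tends_infty D A a)
  (alpha : Cplx)
  (hRe : 0 < Re alpha < 1) (hIm : 0 < Im alpha < 1) (habs : Cabs alpha < 1)
  (eps : nat -> R) (heps : forall n, 0 < eps n < 1) (heps0 : Un_cv eps 0)
  (u : nat -> H) (huD : forall n, D (u n)) (hun : forall n, hnorm (u n) = 1)
  (huA : forall n, hinner (A (u n)) (u n) = Cmul (RtoC (eps n)) alpha)
  (v : nat -> H) (hvD : forall n, D (v n))
  (hvn : forall n, hnorm (v n) <= 1)
  (hAv : forall n, hnorm (A (v n)) <= 1)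
  (hAsv : forall n w, adjoint_rel D A (v n) w -> hnorm w <= 1)
  (hReAv : forall n, Rabs (Re (hinner (A (v n)) (v n))) <= Re alpha / 2) :
  Un_cv (fun n => Re (Cadd (hinner (A (v n)) (u n)) (hinner (A (u n)) (v n)))) 0.
Proof.
  set (c := fun n => Re (hinner (A (v n)) (u n)) + Re (hinner (A (u n)) (v n))).
  assert (Hstep : forall n, exists g, D g /\ hnorm g = 1 /\ 0 < Re (hinner (A g) g) /\
    (1 - 2 * sqrt (eps n)) * Cabs (hinner (A g) g) <= 9 * sqrt (eps n) /\
    (c n)^2 * (Im (hinner (A g) g) / (Re (hinner (A g) g))^2) <= 20).
  { intro n. destruct (hdom (v n) (hvD n)) as [ws Hws].
    apply (step D A hlin hnum (Re alpha) (Im alpha) (eps n) (u n) (v n) ws); auto.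
    - rewrite huA; simpl; ring.
    - rewrite huA; simpl; ring.
    - exact (hAsv n ws Hws). }
  set (g := fun n => proj1_sig (constructive_indefinite_description _ (Hstep n))).
  assert (Hg : forall n, D (g n) /\ hnorm (g n) = 1 /\ 0 < Re (hinner (A (g n)) (g n)) /\
    (1 - 2 * sqrt (eps n)) * Cabs (hinner (A (g n)) (g n)) <= 9 * sqrt (eps n) /\
    (c n)^2 * (Im (hinner (A (g n)) (g n)) / (Re (hinner (A (g n)) (g n)))^2) <= 20).
  { intro n. unfold g. destruct (constructive_indefinite_description _ (Hstep n)) as [x Hx].
    exact Hx. }
  set (a := fun n => Cabs (hinner (A (g n)) (g n)) + eps n).
  assert (Hapos : forall n, 0 < a n).
  { intro n. unfold a. pose proof (heps n). unfold Cabs. pose proof (sqrt_pos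
      (Re (hinner (A (g n)) (g n)) ^ 2 + Im (hinner (A (g n)) (g n)) ^ 2)). lra. }
  assert (Hacv : Un_cv a 0).
  { intros e1 He1.
    destruct (heps0 (Rmin (1/16) (e1 * e1 / 1600))) as [N HN].
    { apply Rmin_glb_lt; nra. }
    exists N. intros n Hn. specialize (HN n Hn).
    unfold R_dist in *. rewrite Rminus_0_r in *.
    pose proof (heps n) as He.
    rewrite Rabs_right in HN by lra.
    pose proof (Rmin_l (1/16) (e1 * e1 / 1600)).
    pose proof (Rmin_r (1/16) (e1 * e1 / 1600)).
    set (s := sqrt (eps n)) in *.
    assert (Hs2 : s * s = eps n) by (apply sqrt_sqrt; lra).
    assert (Hs0 : 0 < s) by (apply sqrt_lt_R0; lra).
    assert (s < 1/4) by nra.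
    assert (s < e1 / 40) by nra.
    destruct (Hg n) as [_ [_ [_ [Hc _]]]].
    fold s in Hc.
    pose proof (Hapos n) as Ha. unfold a in *.
    rewrite Rabs_right by lra.
    set (CC := Cabs (hinner (A (g n)) (g n))) in *.
    assert (CC <= 18 * s).
    { assert (0 <= CC) by (unfold CC, Cabs; apply sqrt_pos). nra. }
    nra. }
  pose proof (hK a Hapos Hacv) as HKa.
  intros e He.
  destruct (HKa (21 / (e * e))) as [N HN].
  exists N. intros n Hn. specialize (HN n Hn).
  destruct (Hg n) as [Dg [Ng [Rg [_ Hc]]]].
  set (r := Im (hinner (A (g n)) (g n)) / (Re (hinner (A (g n)) (g n)))^2) in *.
  assert (Hr : 21 / (e * e) <= r).
  { apply HN. exists (g n). split; [exact Dg|]. split; [exact Ng|].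
    pose proof (Cabs_ge (hinner (A (g n)) (g n))).
    rewrite Rabs_right in H0 by lra.
    pose proof (heps n).
    split; [lra|]. split; [unfold a; lra|]. split; [exact Rg|]. reflexivity. }
  unfold R_dist. rewrite Rminus_0_r.
  change (Rabs (c n) < e).
  assert (0 <= c n ^ 2) by nra.
  assert (c n ^ 2 * (21 / (e * e)) <= 20) by (apply Rle_trans with (c n ^ 2 * r); [apply Rmult_le_compat_l; lra| exact Hc]).
  assert (c n ^ 2 * 21 <= 20 * (e * e)).
  { replace (c n ^ 2 * 21) with (c n ^ 2 * (21 / (e * e)) * (e * e)) by (field; lra). nra. }
  absr; nra.
Qed.
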